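(* Let $v>0$ and let $(a,r,s):\mathbb{R}\to\mathbb{R}^3$ be a solution, not identically constant, of $$\partial_\xi a=r,\qquad \partial_\xi r=-vr-\frac{sa}{2}+\frac{a|r|}{2},\qquad \partial_\xi s=-vs-ra$$ with $(a,r,s)(\xi)\to(a_0,0,0)$ as $\xi\to-\infty$ for some $a_0\in\mathbb{R}$. Then the trajectory is contained in $I_1\cup I_2\cup I_3\cup I_4$, where $I_1=\{r>0,\ s=2r\}$, $I_2=\{r>0,\ s=-r\}$, $I_3=\{r<0,\ s=r\}$, $I_4=\{r<0,\ s=-2r\}$. *)

(* Defs.v *)
From Stdlib Require Import Reals.
From Coquelicot Require Import Coquelicot.
Open Scope R_scope.

Definition in_I1 (r s : R) : Prop := r > 0 /\ s = 2 * r.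
Definition in_I2 (r s : R) : Prop := r > 0 /\ s = - r.
Definition in_I3 (r s : R) : Prop := r < 0 /\ s = r.
Definition in_I4 (r s : R) : Prop := r < 0 /\ s = - 2 * r.

(* Main.v *)
Require Import Defs.
From Stdlib Require Import Reals Lra Psatz Nsatz.
From Coquelicot Require Import Coquelicot.
Open Scope R_scope.
Lemma abs3 (x : R) : is_derive (fun t => Rabs t ^ 3) x (3 * Rabs x * x).
Proof.
destruct (Rtotal_order x 0) as [H|[H|H]].
- apply is_derive_ext_loc with (fun t => - t ^ 3).
  + exists (mkposreal (-x) ltac:(lra)). intros y Hy.
    unfold ball in Hy; simpl in Hy; unfold AbsRing_ball, abs, minus, plus, opp in Hy; simpl in Hy.
    apply Rabs_def2 in Hy. rewrite Rabs_left by lra. assert (K: forall z:R, - z^3 = (-z)^3) by (intro; ring). apply K.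
  + rewrite Rabs_left by lra. auto_derive; [exact I| ring].
- subst. apply is_derive_Reals. intros eps Heps.
  exists (mkposreal (Rmin 1 eps) ltac:(apply Rmin_pos; lra)). intros h Hh Hd. simpl in Hd.
  rewrite Rplus_0_l, Rabs_R0. unfold Rdiv. rewrite Rmult_0_r.
  ring_simplify (Rabs h ^ 3 - 0) .
  assert (Hm1 := Rmin_l 1 eps). assert (Hm2 := Rmin_r 1 eps).
  rewrite Rminus_0_r, Rabs_mult, Rabs_Rinv by auto.
  replace (Rabs h ^ 3 - 0 ^ 3) with (Rabs h ^ 3) by ring.
  rewrite (Rabs_right (Rabs h ^ 3)) by (apply Rle_ge, pow_le, Rabs_pos).
  assert (0 < Rabs h) by (apply Rabs_pos_lt; auto).
  replace (Rabs h ^ 3 * / Rabs h) with (Rabs h * Rabs h) by (field; lra).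
  nra.
- apply is_derive_ext_loc with (fun t => t ^ 3).
  + exists (mkposreal x ltac:(lra)). intros y Hy.
    unfold ball in Hy; simpl in Hy; unfold AbsRing_ball, abs, minus, plus, opp in Hy; simpl in Hy.
    apply Rabs_def2 in Hy. rewrite Rabs_right by lra. reflexivity.
  + rewrite Rabs_right by lra. auto_derive; [exact I| ring].
Qed.

Lemma deq (f : R -> R) x l l' : is_derive f x l -> l = l' -> is_derive f x l'.
Proof. intros H E; subst; auto. Qed.

Lemma derF (v : R) (a r s : R -> R) x :
  (forall xi, is_derive r xi (- v * r xi - s xi * a xi / 2 + a xi * Rabs (r xi) / 2)) ->
  (forall xi, is_derive s xi (- v * s xi - r xi * a xi)) ->
  is_derive (fun x => s x ^ 3 - 3 * s x * r x ^ 2 - 2 * Rabs (r x) ^ 3) x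
    (-3 * v * (s x ^ 3 - 3 * s x * r x ^ 2 - 2 * Rabs (r x) ^ 3)).
Proof.
intros Hr Hs.
set (dr := - v * r x - s x * a x / 2 + a x * Rabs (r x) / 2).
set (ds := - v * s x - r x * a x).
assert (D1 := is_derive_pow s 3 x ds (Hs x)).
assert (D2 := is_derive_pow r 2 x dr (Hr x)).
assert (D3 := is_derive_comp (fun t => Rabs t ^ 3) r x _ _ (abs3 (r x)) (Hr x)).
assert (D4 := is_derive_mult s (fun x => r x ^ 2) x _ _ (Hs x) D2 Rmult_comm).
assert (D := is_derive_minus _ _ x _ _ (is_derive_minus _ _ x _ _ D1 (is_derive_scal _ x 3 _ D4)) (is_derive_scal _ x 2 _ D3)).
simpl in D.
eapply deq; [eapply is_derive_ext; [| exact D] |].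
- intros t. unfold minus, plus, opp, scal, mult; simpl. unfold mult; simpl. match goal with |- ?A = ?B => change (@eq R A B) end; ring.
- unfold minus, plus, opp, scal, mult, dr, ds; simpl. unfold mult; simpl.
  assert (Hab: Rabs (r x) * Rabs (r x) = r x * r x) by (rewrite <- Rabs_mult; apply Rabs_right; nra).
  match goal with |- ?A = ?B => change (@eq R A B) end. unfold Rdiv. assert (Hh: 2 * / 2 = 1) by field. set (h := / 2) in *. nsatz.
Qed.

Lemma ball0 (y e : R) : ball 0 e y -> Rabs y < e.
Proof. unfold ball; simpl; unfold AbsRing_ball, abs, minus, plus, opp; simpl. rewrite Ropp_0, Rplus_0_r. auto. Qed.

Lemma const_of_deriv0 (f : R -> R) : (forall x, is_derive f x 0) -> forall x y, f x = f y.
Proof.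
intros H x y. destruct (Rtotal_order x y) as [L|[E|L]].
- apply eq_is_derive; auto.
- subst; auto.
- symmetry; apply eq_is_derive; auto.
Qed.

Ltac fin := match goal with |- ?f = 0 => assert (Z: f * f <= 0) by nra;
  apply Rsqr_0_uniq; unfold Rsqr; apply Rle_antisym; [exact Z | apply Rle_0_sqr] end.

Lemma gron (f df : R -> R) (K x y : R) :
  (forall t, is_derive f t (df t)) -> f x = 0 ->
  (forall t, Rmin x y <= t <= Rmax x y -> Rabs (f t * df t) <= K * f t ^ 2) -> f y = 0.
Proof.
intros Hd Hx Hb.
assert (DH : forall c t0, derivable_pt_lim (fun t => f t ^ 2 * exp (c * t)) t0 ((2 * f t0 * df t0 + c * f t0 ^ 2) * exp (c * t0))).
{ intros c t0. apply is_derive_Reals. eapply deq.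
  - apply (is_derive_mult (fun t => f t ^ 2) (fun t => exp (c * t))).
    + apply is_derive_pow, Hd.
    + auto_derive; auto.
    + apply Rmult_comm.
  - unfold mult, plus; simpl. unfold mult; simpl. match goal with |- ?A = ?B => change (@eq R A B) end. ring. }
destruct (Rtotal_order x y) as [L|[E|L]].
- destruct (MVT_cor2 (fun t => f t ^ 2 * exp (-2 * K * t)) (fun t => (2 * f t * df t + (-2 * K) * f t ^ 2) * exp (-2 * K * t)) x y L) as [c [Hc Hcin]].
  + intros c _. apply DH.
  + simpl in Hc. rewrite Hx in Hc.
    assert (Hbc := Hb c ltac:(rewrite Rmin_left, Rmax_right by lra; lra)).
    assert (Hb1 := Rle_trans _ _ _ (Rle_abs _) Hbc). assert (Hb2 : - (f c * df c) <= K * f c ^ 2) by (rewrite <- Rabs_Ropp in Hbc; exact (Rle_trans _ _ _ (Rle_abs _) Hbc)).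
    generalize (exp_pos (-2 * K * c)) (exp_pos (-2 * K * y)); intros.
    simpl in *. set (q := 2 * f c * df c + -2 * K * (f c * (f c * 1))) in *.
    assert (q <= 0) by (unfold q; lra). assert (q * exp (-2 * K * c) <= 0) by nra.
    assert (q * exp (-2 * K * c) * (y - x) <= 0) by nra.
    assert (f y * (f y * 1) * exp (-2 * K * y) <= 0) by lra. fin.
- subst; auto.
- destruct (MVT_cor2 (fun t => f t ^ 2 * exp (2 * K * t)) (fun t => (2 * f t * df t + (2 * K) * f t ^ 2) * exp (2 * K * t)) y x L) as [c [Hc Hcin]].
  + intros c _. apply DH.
  + simpl in Hc. rewrite Hx in Hc.
    assert (Hbc := Hb c ltac:(rewrite Rmin_right, Rmax_left by lra; lra)).
    assert (Hb1 := Rle_trans _ _ _ (Rle_abs _) Hbc). assert (Hb2 : - (f c * df c) <= K * f c ^ 2) by (rewrite <- Rabs_Ropp in Hbc; exact (Rle_trans _ _ _ (Rle_abs _) Hbc)).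
    generalize (exp_pos (2 * K * c)) (exp_pos (2 * K * y)); intros.
    simpl in *. set (q := 2 * f c * df c + 2 * K * (f c * (f c * 1))) in *.
    assert (0 <= q) by (unfold q; lra). assert (0 <= q * exp (2 * K * c)) by nra.
    assert (0 <= q * exp (2 * K * c) * (x - y)) by nra.
    assert (f y * (f y * 1) * exp (2 * K * y) <= 0) by lra. fin.
Qed.

Theorem lemma5 (v : R) (a r s : R -> R) (a0 : R) :
  v > 0 ->
  (forall xi, is_derive a xi (r xi)) ->
  (forall xi, is_derive r xi (- v * r xi - s xi * a xi / 2 + a xi * Rabs (r xi) / 2)) ->
  (forall xi, is_derive s xi (- v * s xi - r xi * a xi)) ->
  filterlim a (Rbar_locally m_infty) (locally a0) ->
  filterlim r (Rbar_locally m_infty) (locally 0) ->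
  filterlim s (Rbar_locally m_infty) (locally 0) ->
  (exists xi1 xi2, (a xi1, r xi1, s xi1) <> (a xi2, r xi2, s xi2)) ->
  forall xi, in_I1 (r xi) (s xi) \/ in_I2 (r xi) (s xi)
          \/ in_I3 (r xi) (s xi) \/ in_I4 (r xi) (s xi).
Proof.
intros Hv Ha Hr Hs La Lr Ls Hnc.
set (F := fun x => s x ^ 3 - 3 * s x * r x ^ 2 - 2 * Rabs (r x) ^ 3).
set (G := fun x => F x * exp (3 * v * x)).
assert (HG : forall x, is_derive G x 0).
{ intro x. eapply deq.
  - apply (is_derive_mult F (fun x => exp (3 * v * x))).
    + apply (derF v a r s x Hr Hs).
    + auto_derive; auto.
    + apply Rmult_comm.
  - unfold mult, plus; simpl. unfold mult; simpl. match goal with |- ?A = ?B => change (@eq R A B) end. unfold F; ring. }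
assert (HF0 : forall x, F x = 0).
{ assert (C0 : G 0 = 0).
  { destruct (Req_dec (G 0) 0) as [E|NE]; auto. exfalso.
    set (d := Rmin 1 (Rabs (G 0) / 7)).
    assert (Hd : 0 < d) by (apply Rmin_pos; [lra| apply Rdiv_lt_0_compat; [apply Rabs_pos_lt; auto| lra]]).
    destruct (proj1 (filterlim_locally r 0) Lr (mkposreal d Hd)) as [M1 HM1].
    destruct (proj1 (filterlim_locally s 0) Ls (mkposreal d Hd)) as [M2 HM2].
    set (x0 := Rmin (Rmin M1 M2) 0 - 1).
    assert (Hx1 : x0 < M1) by (unfold x0; generalize (Rmin_l (Rmin M1 M2) 0) (Rmin_l M1 M2); lra).
    assert (Hx2 : x0 < M2) by (unfold x0; generalize (Rmin_l (Rmin M1 M2) 0) (Rmin_r M1 M2); lra).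
    assert (Hx3 : x0 < 0) by (unfold x0; generalize (Rmin_r (Rmin M1 M2) 0); lra).
    assert (R1 := ball0 _ _ (HM1 x0 Hx1)). assert (R2 := ball0 _ _ (HM2 x0 Hx2)). simpl in R1, R2.
    assert (EG := const_of_deriv0 G HG x0 0).
    assert (Hexp : 0 < exp (3 * v * x0) <= 1).
    { split. apply exp_pos. rewrite <- exp_0. destruct (Rle_lt_or_eq_dec (3 * v * x0) 0) as [L|L]. nra.
      left; apply exp_increasing; auto. rewrite L; lra. }
    unfold G in EG. rewrite Rmult_0_r, exp_0, Rmult_1_r in EG.
    assert (HFb : Rabs (F x0) < 7 * d).
    { unfold F. assert (Hd1 : d <= 1) by apply Rmin_l.
      generalize (Rabs_pos (r x0)); intro.
      assert (R3 := R1).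
      apply Rabs_def2 in R1; apply Rabs_def2 in R2. simpl.
      set (S := s x0) in *. set (Q := r x0) in *. set (T := Rabs Q) in *.
      assert (S * S <= 1) by nra. assert (Q * Q <= 1) by nra. assert (T * T <= 1) by nra.
      assert (0 <= S * S) by nra. assert (0 <= Q * Q) by nra. assert (0 <= T * T) by nra.
      assert (S * (S * S) <= d) by nra. assert (- d <= S * (S * S)) by nra.
      assert (T * (T * T) <= d) by nra.
      assert (S * (Q * Q) <= d) by nra. assert (- d <= S * (Q * Q)) by nra.
      apply Rabs_def1; nra. }
    assert (Hd2 : d <= Rabs (G 0) / 7) by apply Rmin_r.
    assert (Rabs (G 0) <= Rabs (F x0)).
    { assert (E0 : G 0 = F x0 * exp (3 * v * x0)) by (rewrite EG; unfold G; rewrite Rmult_0_r, exp_0; ring).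
      rewrite E0, Rabs_mult, (Rabs_right (exp _)) by lra. generalize (Rabs_pos (F x0)); nra. }
    assert (0 < Rabs (G 0)) by (apply Rabs_pos_lt; auto). lra. }
  intro x. assert (EG := const_of_deriv0 G HG x 0). rewrite C0 in EG. unfold G in EG.
  generalize (exp_pos (3 * v * x)). intro. nra. }
assert (Hsr : forall x, s x = 2 * Rabs (r x) \/ s x = - Rabs (r x)).
{ intro x. assert (E := HF0 x). unfold F in E.
  assert (Hab: Rabs (r x) * Rabs (r x) = r x * r x) by (rewrite <- Rabs_mult; apply Rabs_right; nra).
  assert (E2 : (s x - 2 * Rabs (r x)) * ((s x + Rabs (r x)) * (s x + Rabs (r x))) = 0).
  { rewrite <- E. simpl. rewrite !Rmult_1_r, <- Hab. ring. }
  apply Rmult_integral in E2. destruct E2 as [E2|E2]; [left; lra|].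
  apply Rmult_integral in E2. right; lra. }
assert (Hrnz : forall x, r x <> 0).
{ intros x1 Hx1.
  assert (Rall : forall y, r y = 0).
  { intro y.
    assert (Hle : Rmin x1 y <= Rmax x1 y) by (apply Rle_trans with x1; [apply Rmin_l|apply Rmax_l]).
    destruct (continuity_ab_maj (fun t => Rabs (a t)) (Rmin x1 y) (Rmax x1 y) Hle) as [Mx [HM _]].
    { intros c _. apply (continuity_pt_comp a Rabs).
      - apply continuity_pt_filterlim. exact (ex_derive_continuous (V := R_NormedModule) a c (ex_intro _ (r c) (Ha c))).
      - apply Rcontinuity_abs. }
    set (M := Rabs (a Mx)) in *.
    apply (gron r (fun t => - v * r t - s t * a t / 2 + a t * Rabs (r t) / 2) (v + 2 * M + 1) x1 y Hr Hx1).
    intros t Ht. specialize (HM t Ht). simpl in HM.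
    assert (M0 : 0 <= M) by apply Rabs_pos.
    assert (Ha1 := Rle_trans _ _ _ (Rle_abs _) HM).
    assert (Ha2 : - a t <= M) by (rewrite <- Rabs_Ropp in HM; exact (Rle_trans _ _ _ (Rle_abs _) HM)).
    apply Rabs_le. simpl.
    destruct (Rle_or_lt 0 (r t)) as [P|P].
    - rewrite (Rabs_right (r t)) in * by lra.
      destruct (Hsr t) as [E|E]; rewrite E; rewrite ?(Rabs_right (r t)) by lra; assert (0 <= r t * r t) by nra; split; nra.
    - rewrite (Rabs_left (r t)) in * by lra.
      destruct (Hsr t) as [E|E]; rewrite E; rewrite ?(Rabs_left (r t)) by lra; assert (0 <= r t * r t) by nra; split; nra. }
  assert (Sall : forall y, s y = 0) by (intro y; destruct (Hsr y) as [E|E]; rewrite E, Rall, Rabs_R0; ring).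
  assert (Aall : forall x y, a x = a y).
  { apply const_of_deriv0. intro x. rewrite <- (Rall x). apply Ha. }
  destruct Hnc as [y1 [y2 Hne]]. apply Hne. rewrite (Aall y1 y2), !Rall, !Sall. reflexivity. }
intro xi. unfold in_I1, in_I2, in_I3, in_I4.
destruct (Rtotal_order (r xi) 0) as [P|[P|P]].
- destruct (Hsr xi) as [E|E]; rewrite Rabs_left in E by lra; lra.
- exfalso; apply (Hrnz xi P).
- destruct (Hsr xi) as [E|E]; rewrite Rabs_right in E by lra; lra.
Qed.
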